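(* Let $L$ be a solvable finite-dimensional Lie algebra over a field $F$ of characteristic $p$, such that $L^2$ is nilpotent of class less than $p$, and let $A/B$ be a complemented chief factor of $L$. Then the map which assigns to each conjugacy class $\{\exp(\mathrm{ad}\,a)(M) : a \in L\}$ of complements of $A/B$ in $L$ the common core $M_L$ of its elements induces a bijection between the set of all conjugacy classes of complements of $A/B$ in $L$ and the set of all ideals $N$ of $L$ which complement $A/B$ in $C_L(A/B)$ (i.e. $C_L(A/B) = A + N$ and $A \cap N = B$). Consequently there is a bijection between the set of precrowns of $L$ associated with $A/B$ and the set of conjugacy classes of complements of $A/B$ in $L$.
   Context: A chief factor of $L$ is $A/B$ with $B\subsetneq A$ ideals and no ideal strictly between; $C_L(A/B) = \{x : [x,A]\subseteq B\}$. A subalgebra $M$ supplements $A/B$ if $L = A+M$ and $B \subseteq A\cap M$, and complements it if moreover $A \cap M = B$. The core $M_L$ is the largest ideal of $L$ in $M$; $L$ is primitive if some maximal subalgebra has zero core; $L$ is monolithic if it has a unique minimal ideal. Two complements $M,S$ are conjugate if $S = \exp(\mathrm{ad}\,a)(M)$ for some $a\in L$ (for which $\exp(\mathrm{ad}\,a)$ is a defined automorphism). For a supplemented chief factor $A/B$ and a maximal subalgebra $M$ supplementing $A/B$ with $L/M_L$ monolithic and primitive, the chief factor $\mathrm{Soc}(L/M_L) = (A+M_L)/M_L$ is called the precrown of $L$ associated with $M$ and $A/B$; these are the precrowns associated with $A/B$. *)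

(* Defs.v *)
(* Finite-dimensional Lie algebras over a field F are modelled
   as a finite-dimensional F-vector space V (a vectType) with a bracket
   br : V -> V -> V satisfying the Lie axioms; subspaces are {vspace V}. *)
From HB Require Import structures.
From mathcomp Require Import all_boot all_order all_algebra.
Set Implicit Arguments.
Unset Strict Implicit.
Unset Printing Implicit Defensive.
Import GRing.Theory.
Local Open Scope ring_scope.

Section Lie.
Variables (F : fieldType) (V : vectType F) (br : V -> V -> V).

Definition is_lie : Prop :=
  [/\ (forall x a u v, br x (a *: u + v) = a *: br x u + br x v),
      (forall y a u v, br (a *: u + v) y = a *: br u y + br v y),
      (forall x, br x x = 0) &
      (forall x y z, br x (br y z) + br y (br z x) + br z (br x y) = 0)].

(* characteristic of F is p (p = 0 meaning characteristic zero) *)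
Definition has_char (p : nat) : Prop :=
  if p == 0%N then [pchar F] =i pred0 else p \in [pchar F].

Definition brs (A B : {vspace V}) : {vspace V} :=
  <<[seq br x y | x <- vbasis A, y <- vbasis B]>>%VS.

Fixpoint dser (N : {vspace V}) (k : nat) : {vspace V} :=
  if k is k'.+1 then brs (dser N k') (dser N k') else N.

Definition solvable_lie : Prop := exists k, dser fullv k = 0%VS.

(* lower central series: lcs N k = N^(k+1), i.e. N^1 = N, N^(k+1) = [N^k, N] *)
Fixpoint lcs (N : {vspace V}) (k : nat) : {vspace V} :=
  if k is k'.+1 then brs (lcs N k') N else N.

(* N is nilpotent of class < p (for p = 0: N is nilpotent, no bound) *)
Definition nilp_class_lt (N : {vspace V}) (p : nat) : Prop :=
  if p == 0%N then exists k, lcs N k = 0%VS else lcs N p.-1 = 0%VS.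

Definition subalg (M : {vspace V}) : Prop :=
  forall x y, x \in M -> y \in M -> br x y \in M.

Definition ideal (I : {vspace V}) : Prop :=
  forall x y, y \in I -> br x y \in I.

Definition chief_factor (A B : {vspace V}) : Prop :=
  [/\ ideal A, ideal B, (B <= A)%VS, A != B &
      forall C, ideal C -> (B <= C)%VS -> (C <= A)%VS -> C = B \/ C = A].

Definition supplements (A B M : {vspace V}) : Prop :=
  [/\ subalg M, (A + M)%VS = fullv & (B <= A :&: M)%VS].

Definition complements (A B M : {vspace V}) : Prop :=
  [/\ subalg M, (A + M)%VS = fullv & (A :&: M)%VS = B].

Definition is_core (M K : {vspace V}) : Prop :=
  [/\ ideal K, (K <= M)%VS & forall I, ideal I -> (I <= M)%VS -> (I <= K)%VS].

Definition centB (A B : {vspace V}) (x : V) : Prop :=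
  forall y, y \in A -> br x y \in B.

Definition complements_in_cent (A B N : {vspace V}) : Prop :=
  (forall x, x \in (A + N)%VS <-> centB A B x) /\ (A :&: N)%VS = B.

Definition maximal_subalg (M : {vspace V}) : Prop :=
  [/\ subalg M, M != fullv &
      forall S, subalg S -> (M <= S)%VS -> S = M \/ S = fullv].

(* exp(ad a): the truncated series sum_{i<n} (ad a)^i / i!, which is defined
   when (ad a)^n = 0 and 0!,...,(n-1)! are invertible in F. *)
Definition expad (a : V) (n : nat) (x : V) : V :=
  \sum_(i < n) ((i`!)%:R)^-1 *: iter i (br a) x.

Definition expad_defined (a : V) (n : nat) : Prop :=
  (forall x, iter n (br a) x = 0) /\ (forall i, (i < n)%N -> (i`!)%:R != 0 :> F).

Definition is_lie_aut (f : V -> V) : Prop :=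
  [/\ (forall a u v, f (a *: u + v) = a *: f u + f v), bijective f &
      forall x y, f (br x y) = br (f x) (f y)].

Definition vimage (f : V -> V) (M : {vspace V}) : {vspace V} :=
  <<[seq f x | x <- vbasis M]>>%VS.

Definition conj_cls (M : {vspace V}) : {vspace V} -> Prop :=
  fun S => exists a n, [/\ expad_defined a n, is_lie_aut (expad a n) &
                          S = vimage (expad a n) M].

Definition is_compl_class (A B : {vspace V}) (X : {vspace V} -> Prop) : Prop :=
  exists M, complements A B M /\ X = conj_cls M.

(* Quotients L/K are described through the correspondence with ideals and
   subalgebras of L containing K. I is a minimal ideal of L/K, i.e. I/K. *)
Definition min_ideal_over (K I : {vspace V}) : Prop :=
  [/\ ideal I, (K <= I)%VS, I != K &
      forall J, ideal J -> (K <= J)%VS -> (J <= I)%VS -> J = K \/ J = I].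

Definition monolithic_quo (K : {vspace V}) : Prop :=
  exists I, min_ideal_over K I /\ forall J, min_ideal_over K J -> J = I.

(* L/K is primitive: some maximal subalgebra S/K of L/K has zero core *)
Definition primitive_quo (K : {vspace V}) : Prop :=
  exists S, [/\ maximal_subalg S, (K <= S)%VS & is_core S K].

(* P = (A + M_L, M_L) represents the precrown (A + M_L)/M_L associated
   with M and A/B *)
Definition is_precrown (A B : {vspace V}) (P : {vspace V} * {vspace V}) : Prop :=
  exists M K, [/\ maximal_subalg M, supplements A B M, is_core M K,
                 monolithic_quo K /\ primitive_quo K & P = ((A + K)%VS, K)].

End Lie.

(* Main.v *)
Require Import Defs.
From HB Require Import structures.
From mathcomp Require Import all_boot all_order all_algebra.
From mathcomp Require Import zify.
From Stdlib Require Import Classical FunctionalExtensionality PropExtensionality.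
Set Implicit Arguments. Unset Strict Implicit. Unset Printing Implicit Defensive.
Import GRing.Theory.
Local Open Scope ring_scope.


Lemma lfE (F : fieldType) (V : vectType F) (f : V -> V)
  (fL : forall a u v, f (a *: u + v) = a *: f u + f v) : linfun f =1 f.
Proof.
pose g : {linear V -> V} := HB.pack f (GRing.isLinear.Build F V V *:%R f fL).
exact: (lfunE g).
Qed.

Section Lie.
Variables (F : fieldType) (V : vectType F) (br : V -> V -> V).
Hypothesis HL : is_lie br.

Lemma brLr x a u v : br x (a *: u + v) = a *: br x u + br x v.
Proof. by case: HL. Qed.
Lemma brLl y a u v : br (a *: u + v) y = a *: br u y + br v y.
Proof. by case: HL. Qed.
Lemma brxx x : br x x = 0. Proof. by case: HL. Qed.
Lemma jac x y z : br x (br y z) + br y (br z x) + br z (br x y) = 0.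
Proof. by case: HL. Qed.

Lemma brDr x u v : br x (u + v) = br x u + br x v.
Proof. by have := brLr x 1 u v; rewrite !scale1r. Qed.
Lemma brDl y u v : br (u + v) y = br u y + br v y.
Proof. by have := brLl y 1 u v; rewrite !scale1r. Qed.
Lemma br0r x : br x 0 = 0.
Proof. have H := brDr x 0 0; rewrite addr0 in H. by apply: (@addrI _ (br x 0)); rewrite addr0 -H. Qed.
Lemma br0l x : br 0 x = 0.
Proof. have H := brDl x 0 0; rewrite addr0 in H. by apply: (@addrI _ (br 0 x)); rewrite addr0 -H. Qed.
Lemma brZr x a u : br x (a *: u) = a *: br x u.
Proof. by rewrite -[a *: u]addr0 brLr br0r addr0. Qed.
Lemma brZl x a u : br (a *: u) x = a *: br u x.
Proof. by rewrite -[a *: u]addr0 brLl br0l addr0. Qed.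
Lemma brNr x u : br x (- u) = - br x u.
Proof. by rewrite -scaleN1r brZr scaleN1r. Qed.
Lemma brNl x u : br (- u) x = - br u x.
Proof. by rewrite -scaleN1r brZl scaleN1r. Qed.
Lemma brBr x u v : br x (u - v) = br x u - br x v.
Proof. by rewrite brDr brNr. Qed.
Lemma brBl x u v : br (u - v) x = br u x - br v x.
Proof. by rewrite brDl brNl. Qed.
Lemma brC x y : br x y = - br y x.
Proof.
have := brxx (x + y); rewrite brDl !brDr !brxx add0r addr0.
by move/eqP; rewrite addr_eq0 => /eqP.
Qed.
Lemma brJ x y z : br x (br y z) = br (br x y) z + br y (br x z).
Proof.
have := jac x y z; rewrite (brC z (br x y)) (brC z x) brNr.
move=> H; rewrite -[LHS]subr0 -H.
by rewrite !opprD !opprK !addrA subrr add0r addrC.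
Qed.

Lemma linr x : forall a u v, br x (a *: u + v) = a *: br x u + br x v.
Proof. exact: brLr. Qed.
Lemma linl y : forall a u v, br^~ y (a *: u + v) = a *: br u y + br v y.
Proof. exact: brLl. Qed.

Definition adl x : 'End(V) := linfun (br x).
Definition adr y : 'End(V) := linfun (br^~ y).
Lemma adlE x u : adl x u = br x u. Proof. exact: lfE (linr x) u. Qed.
Lemma adrE y u : adr y u = br u y. Proof. exact: lfE (linl y) u. Qed.

Lemma mem_preim (f : 'End(V)) u W : (u \in (f @^-1: W)%VS) = (f u \in W).
Proof. by rewrite memv_preim. Qed.

Lemma vbasis_span (U : {vspace V}) : <<vbasis U>>%VS = U.
Proof. exact: span_basis (vbasisP U). Qed.

Lemma mem_brs (X Y : {vspace V}) x y : x \in X -> y \in Y -> br x y \in brs br X Y.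
Proof.
move=> Xx Yy.
have H1 : forall y', y' \in vbasis Y -> (X <= adr y' @^-1: brs br X Y)%VS.
  move=> y' Hy'; rewrite -{1}(vbasis_span X); apply/span_subvP => x' Hx'.
  rewrite mem_preim adrE; apply: memv_span; apply/allpairsP.
  by exists (x', y').
have : (Y <= adl x @^-1: brs br X Y)%VS.
  rewrite -{1}(vbasis_span Y); apply/span_subvP => y' Hy'.
  rewrite mem_preim adlE -adrE -mem_preim.
  by have /subvP := H1 y' Hy'; apply.
by move/subvP/(_ y Yy); rewrite mem_preim adlE.
Qed.

Lemma brs_sub (X Y W : {vspace V}) :
  (forall x y, x \in X -> y \in Y -> br x y \in W) -> (brs br X Y <= W)%VS.
Proof.
move=> H; apply/span_subvP => z /allpairsP [[x y] /= [Hx Hy ->]].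
by apply: H; apply: vbasis_mem.
Qed.


Implicit Types (A B I J K M N S X Y W : {vspace V}).

Lemma ideal_brs X Y : ideal br X -> ideal br Y -> ideal br (brs br X Y).
Proof.
move=> iX iY w z Hz.
have : (brs br X Y <= adl w @^-1: brs br X Y)%VS.
  apply: brs_sub => x y Hx Hy; rewrite mem_preim adlE brJ.
  by apply: memvD; apply: mem_brs => //; [apply: iX | apply: iY].
by move/subvP/(_ z Hz); rewrite mem_preim adlE.
Qed.

Lemma ideal_add X Y : ideal br X -> ideal br Y -> ideal br (X + Y).
Proof.
move=> iX iY w z /memv_addP [x Hx [y Hy ->]].
by rewrite brDr; apply: memv_add; [apply: iX | apply: iY].
Qed.

Lemma ideal_cap X Y : ideal br X -> ideal br Y -> ideal br (X :&: Y).
Proof.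
move=> iX iY w z /memv_capP [Hx Hy].
by apply/memv_capP; split; [apply: iX | apply: iY].
Qed.

Lemma idealT : ideal br fullv. Proof. by move=> x y _; apply: memvf. Qed.
Lemma ideal0 : ideal br 0%VS.
Proof. by move=> x y; rewrite memv0 => /eqP ->; rewrite br0r memv0. Qed.

Lemma idealL X x y : ideal br X -> x \in X -> br x y \in X.
Proof. by move=> iX Hx; rewrite brC memvN; apply: iX. Qed.

Lemma ideal_subalg X : ideal br X -> subalg br X.
Proof. by move=> iX x y _ Hy; apply: iX. Qed.

Lemma brs_mono X Y X' Y' : (X <= X')%VS -> (Y <= Y')%VS -> (brs br X Y <= brs br X' Y')%VS.
Proof.
move=> /subvP sX /subvP sY; apply: brs_sub => x y Hx Hy.
by apply: mem_brs; [apply: sX | apply: sY].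
Qed.

Lemma dser_ideal k : ideal br (dser br fullv k).
Proof. elim: k => [|k IH] /=; [exact: idealT | exact: ideal_brs]. Qed.

Lemma chief_cases A B J : chief_factor br A B -> ideal br J -> (B <= J)%VS ->
  (J <= A)%VS -> J = B \/ J = A.
Proof. by case=> _ _ _ _ H; apply: H. Qed.

Lemma chief_neq A B : chief_factor br A B -> ~ (A <= B)%VS.
Proof.
case=> _ _ sBA nAB _ sAB; move/negP: nAB; apply.
by rewrite eqEsubv sAB sBA.
Qed.

Lemma brs_addB D B : ideal br B -> (brs br (D + B) (D + B) <= brs br D D + B)%VS.
Proof.
move=> iB; apply: brs_sub => x y /memv_addP [d Hd [b Hb ->]] /memv_addP [d' Hd' [b' Hb' ->]].
rewrite !brDl !brDr -!addrA; apply: memv_add; first exact: mem_brs.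
apply: memvD; first exact: iB.
by apply: memvD; [apply: idealL | apply: iB].
Qed.

Lemma chief_abelian A B : chief_factor br A B -> solvable_lie br ->
  forall x y, x \in A -> y \in A -> br x y \in B.
Proof.
move=> cAB [k Hk].
have [iA iB sBA _ _] := cAB.
have sJA : (brs br A A + B <= A)%VS.
  rewrite subv_add sBA andbT; apply: brs_sub => x y _ Hy; exact: iA.
have [HJ|HJ] := chief_cases cAB (ideal_add (ideal_brs iA iA) iB) (addvSr _ _) sJA.
  by move=> x y Hx Hy; rewrite -HJ; apply/(subvP (addvSl _ _)); apply: mem_brs.
exfalso; apply: (chief_neq cAB).
suff H : forall j, (A <= dser br fullv j + B)%VS by move: (H k); rewrite Hk add0v.
elim=> [|j IH] /=; first by apply: subv_trans (subvf _) (addvSl _ _).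
rewrite -{1}HJ; apply: subv_trans (addvS (brs_mono IH IH) (subvv B)) _.
by rewrite subv_add brs_addB // addvSr.
Qed.


Local Notation L2 := (brs br fullv fullv).

Lemma memL2 x y : br x y \in L2.
Proof. by apply: mem_brs; apply: memvf. Qed.

Lemma lcs_S k : (lcs br L2 k.+1 <= lcs br L2 k)%VS.
Proof.
elim: k => [|k IH] /=; first by apply: brs_sub => x y _ _; apply: memL2.
exact: brs_mono IH (subvv _).
Qed.

Lemma lcs_mono i k : (i <= k)%N -> (lcs br L2 k <= lcs br L2 i)%VS.
Proof.
move=> /subnK <-; elim: (k - i)%N => [|d IH]; first by rewrite add0n subvv.
by rewrite addSn; apply: subv_trans (lcs_S _) IH.
Qed.

Lemma lcs_br j : forall i x y, x \in lcs br L2 i -> y \in lcs br L2 j ->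
  br x y \in lcs br L2 (i + j).+1.
Proof.
elim: j => [|j IH] i x y Hx Hy.
  by rewrite addn0 /=; apply: mem_brs.
have : (lcs br L2 j.+1 <= adl x @^-1: lcs br L2 (i + j.+1).+1)%VS.
  apply: brs_sub => u v Hu Hv; rewrite mem_preim adlE brJ.
  apply: memvD.
    by rewrite addnS /=; apply: mem_brs => //; apply: IH.
  rewrite brC memvN; have := IH i.+1 (br x v) u.
  by rewrite addSn addnS; apply => //; apply: mem_brs.
by move/subvP/(_ y Hy); rewrite mem_preim adlE.
Qed.

Lemma nilp_k p : nilp_class_lt br L2 p -> exists k, lcs br L2 k = 0%VS.
Proof. by rewrite /nilp_class_lt; case: (p == 0%N) => // H; exists p.-1. Qed.

Lemma L2_cent A B : chief_factor br A B -> (exists k, lcs br L2 k = 0%VS) ->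
  forall x y, x \in L2 -> y \in A -> br x y \in B.
Proof.
move=> cAB [k Hk].
have [iA iB sBA _ _] := cAB.
have iL2 : ideal br L2 by apply: ideal_brs; apply: idealT.
have sJA : (brs br L2 A + B <= A)%VS.
  rewrite subv_add sBA andbT; apply: brs_sub => x y _ Hy; exact: iA.
have [HJ|HJ] := chief_cases cAB (ideal_add (ideal_brs iL2 iA) iB) (addvSr _ _) sJA.
  by move=> x y Hx Hy; rewrite -HJ; apply/(subvP (addvSl _ _)); apply: mem_brs.
exfalso; apply: (chief_neq cAB).
suff H : forall j, (A <= lcs br L2 j + B)%VS by move: (H k); rewrite Hk add0v.
elim=> [|j IH] /=.
  rewrite -{1}HJ; apply: addvS (subvv B).
  by apply: brs_sub => x y _ _; apply: memL2.
rewrite -{1}HJ subv_add addvSr andbT; apply: brs_sub => x y Hx Hy.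
move/subvP: IH => /(_ y Hy) /memv_addP [l Hl [b Hb ->]].
rewrite brDr; apply: memv_add; last exact: iB.
by rewrite brC memvN; apply: mem_brs.
Qed.


Lemma core_exists M : exists K, is_core br M K.
Proof.
apply: NNPP => Hn.
have H : forall n, exists I, [/\ ideal br I, (I <= M)%VS & (n <= \dim I)%N].
  elim=> [|n [I [iI sIM dI]]]; first by exists 0%VS; split; [exact: ideal0 | exact: sub0v | ].
  have [J [iJ sJM nJI]] : exists J, [/\ ideal br J, (J <= M)%VS & ~~ (J <= I)%VS].
    apply: NNPP => HJ; apply: Hn; exists I; split => // J iJ sJM.
    by apply: NNPP => nJ; apply: HJ; exists J; split => //; apply/negP.
  exists (I + J)%VS; split; first exact: ideal_add.
    by rewrite subv_add sIM.
  apply: leq_ltn_trans dI _; rewrite ltnNge; apply/negP => hd.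
  have : I == (I + J)%VS by rewrite eqEdim addvSl hd.
  by move/eqP => E; move/negP: nJI; apply; rewrite E addvSr.
have [I [_ _ dI]] := H (\dim (fullv : {vspace V})).+1.
by move: (dimvS (subvf I)); rewrite leqNgt dI.
Qed.

Lemma core_uniq M K K' : is_core br M K -> is_core br M K' -> K = K'.
Proof.
case=> iK sK HK [iK' sK' HK']; apply/eqP; rewrite eqEsubv.
by rewrite (HK' _ iK sK) (HK _ iK' sK').
Qed.

Definition Cv A B : {vspace V} :=
  (\bigcap_(i < \dim A) (adr (tnth (vbasis A) i) @^-1: B))%VS.

Lemma memCv A B x : (x \in Cv A B) <-> centB br A B x.
Proof.
split.
  move=> Hx y Hy.
  have : (A <= adl x @^-1: B)%VS.
    rewrite -{1}(vbasis_span A); apply/span_subvP => y' /tnthP [i ->].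
    rewrite mem_preim adlE -adrE -mem_preim.
    by move: Hx; rewrite memvE => /subv_bigcapP /(_ i isT); rewrite -memvE.
  by move/subvP/(_ y Hy); rewrite mem_preim adlE.
move=> Hx; rewrite memvE; apply/subv_bigcapP => i _; rewrite -memvE.
by rewrite mem_preim adrE; apply: Hx; apply: vbasis_mem; apply: mem_tnth.
Qed.

Lemma Cv_ideal A B : ideal br A -> ideal br B -> ideal br (Cv A B).
Proof.
move=> iA iB w z /memCv Hz; apply/memCv => y Hy.
have E := brJ w z y.
have -> : br (br w z) y = br w (br z y) - br z (br w y).
  by rewrite E addrK.
by apply: memvB; [apply: iB; apply: Hz | apply: Hz; apply: iA].
Qed.

Section Compl.
Variables (A B M K : {vspace V}).
Hypotheses (cAB : chief_factor br A B) (solv : solvable_lie br)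
  (cM : complements br A B M) (kM : is_core br M K).

Let iA : ideal br A. Proof. by case: cAB. Qed.
Let iB : ideal br B. Proof. by case: cAB. Qed.
Let sBA : (B <= A)%VS. Proof. by case: cAB. Qed.
Let ab := chief_abelian cAB solv.

Lemma compl_BM : (B <= M)%VS.
Proof. by case: cM => _ _ <-; apply: capvSr. Qed.

Lemma compl_BK : (B <= K)%VS.
Proof. by case: kM => _ _ H; apply: H iB compl_BM. Qed.

Lemma compl_AK : (A :&: K)%VS = B.
Proof.
apply/eqP; rewrite eqEsubv; apply/andP; split.
  case: cM => _ _ <-; case: kM => _ sKM _; exact: capvS (subvv A) sKM.
by rewrite subv_cap sBA compl_BK.
Qed.

Lemma compl_AM_dec x : exists2 a, a \in A & x - a \in M.
Proof.
case: cM => _ HL' _.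
have : x \in (A + M)%VS by rewrite HL' memvf.
by case/memv_addP => a Ha [m Hm ->]; exists a => //; rewrite addrC addKr.
Qed.

Lemma compl_cent : complements_in_cent br A B K.
Proof.
split; last exact: compl_AK.
move=> x; split.
  case/memv_addP => a Ha [k Hk ->] y Hy; rewrite brDl; apply: memvD; first exact: ab.
  by rewrite -compl_AK; apply/memv_capP; split; [apply: iA | apply: idealL => //; case: kM].
move=> Hx; have [a Ha Hm] := compl_AM_dec x.
have -> : x = a + (x - a) by rewrite addrC subrK.
apply: memv_add => //.
have iCM : ideal br (Cv A B :&: M).
  move=> w z /memv_capP [Hz1 Hz2]; apply/memv_capP; split.
    exact: Cv_ideal.
  have [a' Ha' Hm'] := compl_AM_dec w.
  have -> : w = a' + (w - a') by rewrite addrC subrK.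
  rewrite brDl; apply: memvD.
    rewrite brC memvN; apply/(subvP compl_BM).
    by move/memCv: Hz1; apply.
  by case: cM => sM _ _; apply: sM.
case: kM => _ _ HK; have := HK _ iCM (capvSr _ _); move/subvP; apply.
apply/memv_capP; split => //; apply/memCv => y Hy.
by rewrite brBl; apply: memvB; [apply: Hx | apply: ab].
Qed.

Lemma compl_CM x : x \in M -> centB br A B x -> x \in K.
Proof.
move=> Hx /(proj1 compl_cent x).2 /memv_addP [a Ha [k Hk Ex]].
have Ha' : a \in B.
  case: cM => _ _ <-; apply/memv_capP; split => //.
  have -> : a = x - k by rewrite Ex addrK.
  by apply: memvB => //; case: kM => _ /subvP H _; apply: H.
by rewrite Ex; apply: memvD => //; apply/(subvP compl_BK).
Qed.

End Compl.


Section Compl2.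
Variables (A B M K : {vspace V}).
Hypotheses (cAB : chief_factor br A B) (solv : solvable_lie br)
  (cM : complements br A B M) (kM : is_core br M K)
  (nil : exists k, lcs br L2 k = 0%VS).

Let iA : ideal br A. Proof. by case: cAB. Qed.
Let iB : ideal br B. Proof. by case: cAB. Qed.
Let sBA : (B <= A)%VS. Proof. by case: cAB. Qed.
Let ab := chief_abelian cAB solv.
Let iK : ideal br K. Proof. by case: kM. Qed.
Let sKM : (K <= M)%VS. Proof. by case: kM. Qed.
Let sM : subalg br M. Proof. by case: cM. Qed.

Lemma Kcent k y : k \in K -> y \in A -> br k y \in B.
Proof.
move=> Hk Hy; rewrite -(compl_AK cAB cM kM); apply/memv_capP; split.
  exact: iA.
exact: idealL.
Qed.

Lemma MM_K u v : u \in M -> v \in M -> br u v \in K.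
Proof.
move=> Hu Hv; apply: (compl_CM cAB solv cM kM); first exact: sM.
by move=> y Hy; apply: (L2_cent cAB nil) => //; apply: memL2.
Qed.

Lemma cross w u v : u \in M -> v \in A -> br (br w u) v \in B.
Proof.
move=> Hu Hv; have [a Ha Hm] := compl_AM_dec cM w.
have -> : w = a + (w - a) by rewrite addrC subrK.
rewrite brDl brDl; apply: memvD.
  by apply: ab => //; apply: idealL.
by apply: Kcent => //; apply: MM_K.
Qed.

Lemma ntriv_I m0 : m0 \in M -> ideal br (brs br <[m0]> A + B).
Proof.
move=> Hm0 w z /memv_addP [s Hs [b Hb ->]].
rewrite brDr; apply: memvD; last by apply/(subvP (addvSr _ _)); apply: iB.
have : (brs br <[m0]> A <= adl w @^-1: (brs br <[m0]> A + B))%VS.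
  apply: brs_sub => u v Hu Hv; rewrite mem_preim adlE brJ addrC.
  have HuM : u \in M by case/vlineP: Hu => c ->; apply: memvZ.
  apply: memv_add; first by apply: mem_brs => //; apply: iA.
  exact: cross.
by move/subvP/(_ s Hs); rewrite mem_preim adlE.
Qed.

Lemma Surj m0 y0 : m0 \in M -> y0 \in A -> br m0 y0 \notin B ->
  forall a, a \in A -> exists2 x, x \in A & br m0 x - a \in B.
Proof.
move=> Hm0 Hy0 nB a Ha.
have sIA : (brs br <[m0]> A + B <= A)%VS.
  by rewrite subv_add sBA andbT; apply: brs_sub => u v _ Hv; apply: iA.
have [HI|HI] := chief_cases cAB (ntriv_I Hm0) (addvSr _ _) sIA.
  by case/negP: nB; rewrite -HI; apply/(subvP (addvSl _ _)); apply: mem_brs => //; apply: memv_line.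
move: Ha; rewrite -{1}HI => /memv_addP [s Hs [b Hb ->]].
have : (brs br <[m0]> A <= adl m0 @: A)%VS.
  apply: brs_sub => u v /vlineP [c ->] Hv.
  by rewrite brZl -brZr -adlE; apply: memv_img; apply: memvZ.
move/subvP/(_ s Hs)/memv_imgP => [x Hx Es]; exists x => //.
by rewrite Es adlE opprD addrA subrr add0r memvN.
Qed.

Lemma Inj m0 y0 : m0 \in M -> y0 \in A -> br m0 y0 \notin B ->
  forall x, x \in A -> br m0 x \in B -> x \in B.
Proof.
move=> Hm0 Hy0 nB x Hx Hmx.
pose J := (A :&: (adl m0 @^-1: B))%VS.
have iJ : ideal br J.
  move=> w z /memv_capP [Hz1]; rewrite mem_preim adlE => Hz2.
  apply/memv_capP; split; first exact: iA.
  rewrite mem_preim adlE brJ; apply: memvD; last exact: iB.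
  have [a Ha Hm] := compl_AM_dec cM w.
  have -> : w = a + (w - a) by rewrite addrC subrK.
  rewrite brDr brDl; apply: memvD.
    by apply: ab => //; apply: iA.
  by apply: Kcent => //; apply: MM_K.
have sBJ : (B <= J)%VS.
  rewrite subv_cap sBA /=; apply/subvP => b Hb; rewrite mem_preim adlE.
  exact: iB.
have [HJ|HJ] := chief_cases cAB iJ sBJ (capvSl _ _).
  by rewrite -HJ; apply/memv_capP; split => //; rewrite mem_preim adlE.
case/negP: nB; have : y0 \in J by rewrite HJ.
by case/memv_capP => _; rewrite mem_preim adlE.
Qed.

Lemma ZM mu y0 : mu \in M -> y0 \in A -> br mu y0 \notin B ->
  forall y, br mu y \in K -> y \in M.
Proof.
move=> Hmu Hy0 nB y Hy.
have [a Ha Hm] := compl_AM_dec cM y.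
have -> : y = a + (y - a) by rewrite addrC subrK.
apply: memvD => //; apply/(subvP (compl_BM cM)).
apply: (Inj Hmu Hy0 nB Ha).
rewrite -(compl_AK cAB cM kM); apply/memv_capP; split; first exact: iA.
have -> : br mu a = br mu y - br mu (y - a) by rewrite brBr opprB addrC subrK.
by apply: memvB => //; apply: MM_K.
Qed.

Lemma central_MK : (forall z y, y \in A -> br z y \in B) -> M = K.
Proof.
move=> Hc; apply/eqP; rewrite eqEsubv sKM andbT; apply/subvP => m Hm.
by apply: (compl_CM cAB solv cM kM) => // y Hy; apply: Hc.
Qed.

Lemma compl_maximal : maximal_subalg br M.
Proof.
split => //.
  apply/negP => /eqP EM; case: cM => _ _; rewrite EM capvf => EA.
  by apply: (chief_neq cAB); rewrite EA subvv.
move=> S sS sMS.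
have iJ : ideal br (S :&: A).
  move=> w z /memv_capP [Hz1 Hz2]; apply/memv_capP; split; last exact: iA.
  have [a Ha Hm] := compl_AM_dec cM w.
  have -> : w = a + (w - a) by rewrite addrC subrK.
  rewrite brDl; apply: memvD.
    by apply/(subvP sMS)/(subvP (compl_BM cM)); apply: ab.
  by apply: sS => //; apply: (subvP sMS).
have sBJ : (B <= S :&: A)%VS by rewrite subv_cap sBA (subv_trans (compl_BM cM) sMS).
have [HJ|HJ] := chief_cases cAB iJ sBJ (capvSr _ _).
  left; apply/eqP; rewrite eqEsubv sMS andbT; apply/subvP => x Hx.
  have [a Ha Hm] := compl_AM_dec cM x.
  have -> : x = a + (x - a) by rewrite addrC subrK.
  apply: memvD => //; apply/(subvP (compl_BM cM)); rewrite -HJ.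
  apply/memv_capP; split => //.
  have -> : a = x - (x - a) by rewrite opprB addrC subrK.
  by apply: memvB => //; apply: (subvP sMS).
right; apply/eqP; rewrite eqEsubv subvf /=; case: cM => _ <- _.
by rewrite subv_add sMS andbT -HJ capvSl.
Qed.

Lemma compl_monolithic : monolithic_quo br K.
Proof.
have sBK := compl_BK cAB cM kM.
have iAK : ideal br (A + K) by apply: ideal_add.
have mI : min_ideal_over br K (A + K).
  split => //; first exact: addvSr.
    apply/negP => /eqP E; apply: (chief_neq cAB).
    rewrite -(compl_AK cAB cM kM) subv_cap subvv /= -E addvSl //.
  move=> J iJ sKJ sJAK.
  have sBJA : (B <= J :&: A)%VS by rewrite subv_cap sBA (subv_trans sBK sKJ).
  have [HJ|HJ] := chief_cases cAB (ideal_cap iJ iA) sBJA (capvSr _ _).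
    left; apply/eqP; rewrite eqEsubv sKJ andbT; apply/subvP => j Hj.
    move/subvP: sJAK => /(_ j Hj) /memv_addP [a Ha [k Hk Ej]].
    rewrite Ej; apply: memvD => //; apply/(subvP sBK); rewrite -HJ.
    apply/memv_capP; split => //.
    have -> : a = j - k by rewrite Ej addrK.
    by apply: memvB => //; apply: (subvP sKJ).
  right; apply/eqP; rewrite eqEsubv sJAK /= subv_add sKJ andbT -HJ capvSl //.
exists (A + K)%VS; split => // J [iJ sKJ nJK HJ].
have iJI : ideal br (J :&: (A + K)) by apply: ideal_cap.
have sKJI : (K <= J :&: (A + K))%VS by rewrite subv_cap sKJ addvSr.
have [E|E] := HJ _ iJI sKJI (capvSl _ _).
  exfalso; move/negP: nJK; apply.
  have sJAK : (J <= A + K)%VS.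
    apply/subvP => j Hj; apply/(proj1 (compl_cent cAB solv cM kM) j).2 => y Hy.
    have Hjy : br j y \in A by apply: iA.
    rewrite -(compl_AK cAB cM kM); apply/memv_capP; split => //.
    rewrite -E; apply/memv_capP; split; first exact: idealL.
    by apply: (subvP (addvSl A K)).
  by move/capv_idPl: sJAK; rewrite E => <-.
have sJAK : (J <= A + K)%VS by rewrite -E capvSr.
case: mI => _ _ _ Hm; have [E'|//] := Hm J iJ sKJ sJAK.
by move/negP: nJK; rewrite E' eqxx.
Qed.

Lemma compl_primitive : primitive_quo br K.
Proof. by exists M; split => //; exact: compl_maximal. Qed.
End Compl2.
End Lie.


Lemma reindex_tri (U : zmodType) (g : nat -> nat -> U) n :
  \sum_(i < n) \sum_(j < i.+1) g j (i - j)%N = \sum_(j < n) \sum_(l < n - j) g j l.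
Proof.
elim: n => [|n IH]; first by rewrite !big_ord0.
rewrite big_ord_recr /= IH [RHS]big_ord_recr /= subSnn big_ord1.
have E : forall j : 'I_n, \sum_(l < n.+1 - j) g j l = \sum_(l < n - j) g j l + g j (n - j)%N.
  move=> j; rewrite subSn ?(ltnW (ltn_ord j)) //; by rewrite big_ord_recr.
rewrite (eq_bigr _ (fun j _ => E j)) big_split /= -!addrA; congr (_ + _).
by rewrite big_ord_recr /= subnn.
Qed.

Lemma split_tri (U : zmodType) (g : nat -> nat -> U) n :
  (forall j l, (n <= j + l)%N -> g j l = 0) ->
  \sum_(j < n) \sum_(l < n) g j l = \sum_(j < n) \sum_(l < n - j) g j l.
Proof.
move=> Hg; apply: eq_bigr => j _.
rewrite -(big_mkord xpredT (g j)) -(big_mkord xpredT (g j)).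
rewrite (@big_cat_nat _ _ _ (n - j)%N 0 n _ _ (leq0n _) (leq_subr j n)) /=.
rewrite [X in _ + X]big1_seq ?addr0 // => l /andP [_].
rewrite mem_index_iota => /andP [H1 _]; apply: Hg.
by rewrite -(leq_add2l j) subnKC ?(ltnW (ltn_ord j)) // in H1.
Qed.

Section Exp.
Variables (F : fieldType) (V : vectType F) (br : V -> V -> V).
Hypothesis HL : is_lie br.
Variable a : V.
Local Notation D := (br a).

Lemma iter_lin i c u v : iter i D (c *: u + v) = c *: iter i D u + iter i D v.
Proof. elim: i => [//|i IH]; by rewrite iterS IH (brLr HL). Qed.
Definition itf i : 'End(V) := linfun (iter i D).
Lemma itfE i u : itf i u = iter i D u.
Proof. exact: lfE (iter_lin i) u. Qed.
Lemma iter0v i : iter i D 0 = 0.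
Proof. by rewrite -itfE linear0. Qed.

Lemma leibniz m x y : iter m D (br x y) =
  \sum_(i < m.+1) ('C(m, i))%:R *: br (iter i D x) (iter (m - i) D y).
Proof.
elim: m => [|m IH]; first by rewrite big_ord_recl big_ord0 /= bin0 scale1r addr0.
rewrite iterS IH -(adlE HL) linear_sum /=.
under eq_bigr => i _ do rewrite linearZ /= (adlE HL) (brJ HL) scalerDr.
rewrite big_split /= [RHS]big_ord_recl.
under [in RHS]eq_bigr => i _ do rewrite lift0 binS natrD scalerDl subSS.
rewrite bin0 scale1r big_split /= addrC addrA; congr (_ + _).
rewrite big_ord_recl /= bin0 scale1r subn0; congr (_ + _).
rewrite [RHS]big_ord_recr /= bin_small // scale0r addr0.
apply: eq_bigr => i _; rewrite /bump leq0n add1n add0n; congr (_ *: br _ _).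
by rewrite -iterS -subSn // ltn_ord.
Qed.


Lemma coef_fact (i j : nat) : (j <= i)%N -> (i`!)%:R != 0 :> F ->
  (i`!)%:R^-1 * ('C(i, j))%:R = (j`!)%:R^-1 * (((i - j)`!)%:R^-1) :> F.
Proof.
move=> ji nz; have E := bin_fact ji.
move: nz; rewrite -E !natrM => nz.
have [c0 nz2] : ('C(i, j))%:R != 0 :> F /\ (j`!)%:R * ((i - j)`!)%:R != 0 :> F.
  by split; apply/eqP => h; move/eqP: nz; apply; rewrite h ?mul0r ?mulr0.
by rewrite invfM mulrC mulrA mulrV ?mul1r ?invfM // unitfE.
Qed.

Variable n : nat.
Hypotheses (Hn : forall x, iter n D x = 0)
  (Hf : forall i, (i < n)%N -> (i`!)%:R != 0 :> F)
  (Hz : forall j l x y, (n <= j + l)%N -> br (iter j D x) (iter l D y) = 0).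

Lemma expad_lin c u v : expad br a n (c *: u + v) = c *: expad br a n u + expad br a n v.
Proof.
rewrite /expad scaler_sumr -big_split; apply: eq_bigr => i _.
by rewrite iter_lin scalerDr !scalerA mulrC.
Qed.

Lemma expad_br x y : expad br a n (br x y) = br (expad br a n x) (expad br a n y).
Proof.
pose g j l := ((j`!)%:R^-1 * (l`!)%:R^-1) *: br (iter j D x) (iter l D y).
have LHS : expad br a n (br x y) = \sum_(i < n) \sum_(j < i.+1) g j (i - j)%N.
  rewrite /expad; apply: eq_bigr => i _; rewrite leibniz scaler_sumr.
  apply: eq_bigr => j _; rewrite scalerA coef_fact //.
    by rewrite -ltnS ltn_ord.
  by apply: Hf; apply: ltn_ord.
have RHS : br (expad br a n x) (expad br a n y) = \sum_(j < n) \sum_(l < n) g j l.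
  rewrite /expad -(adrE HL) linear_sum; apply: eq_bigr => j _ /=.
  rewrite (adrE HL) -(adlE HL) linear_sum; apply: eq_bigr => l _ /=.
  by rewrite /g (adlE HL) (brZl HL) (brZr HL) scalerA.
rewrite LHS RHS reindex_tri split_tri // => j l H.
by rewrite /g Hz // scaler0.
Qed.

Lemma iter_expad j x : iter j D (expad br a n x) =
  \sum_(i < n) (i`!)%:R^-1 *: iter (i + j) D x.
Proof.
rewrite /expad -itfE linear_sum; apply: eq_bigr => i _.
by rewrite linearZ /= itfE addnC iterD.
Qed.

Lemma expad_0 x : expad br a n x = 0 -> x = 0.
Proof.
move=> Hx.
suff H : forall k j, (n - k <= j)%N -> iter j D x = 0.
  by apply: (H n 0%N); rewrite subnn.
elim=> [|k IH] j Hj.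
  by rewrite subn0 in Hj; rewrite -(subnK Hj) iterD Hn iter0v.
case: (leqP (n - k) j) => [|Hlt]; first exact: IH.
have n0 : (0 < n)%N by apply: leq_ltn_trans (leq0n j) (leq_trans Hlt (leq_subr _ _)).
have := iter_expad j x; rewrite Hx iter0v (bigD1 (Ordinal n0)) //= big1 ?addr0.
  by rewrite add0n invr1 scale1r => ->.
move=> i Hi; rewrite IH ?scaler0 //.
have : (0 < i)%N by rewrite lt0n; apply: contraNneq Hi => E; apply/eqP/val_inj.
by move=> i0; lia.
Qed.

Definition ef : 'End(V) := linfun (expad br a n).
Lemma efE u : ef u = expad br a n u.
Proof. exact: lfE expad_lin u. Qed.

Lemma expad_injective : injective (expad br a n).
Proof.
move=> u v E; apply/eqP; rewrite -subr_eq0; apply/eqP; apply: expad_0.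
by rewrite -efE linearB /= !efE E subrr.
Qed.

Lemma lker_ef : lker ef == 0%VS.
Proof. by apply/lker0P => u v; rewrite !efE; apply: expad_injective. Qed.

Lemma limg_ef : limg ef = fullv.
Proof.
apply/eqP; rewrite eqEdim subvf /= limg_dim_eq //.
by rewrite capfv; apply/eqP; apply: lker_ef.
Qed.

Lemma expad_bij : bijective (expad br a n).
Proof.
exists (ef^-1)%VF => x.
  by rewrite -efE; exact: (lker0_lfunK lker_ef).
by rewrite -efE; apply: limg_lfunVK; rewrite limg_ef memvf.
Qed.

Lemma expad_aut : is_lie_aut br (expad br a n).
Proof. split; [exact: expad_lin | exact: expad_bij | exact: expad_br]. Qed.
End Exp.

Section Aut.
Variables (F : fieldType) (V : vectType F) (br : V -> V -> V).
Hypothesis HL : is_lie br.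
Implicit Types (A B I J K M N S X Y W : {vspace V}).

Lemma vimage_img (f : V -> V) U :
  (forall c u v, f (c *: u + v) = c *: f u + f v) ->
  vimage f U = (linfun f @: U)%VS.
Proof.
move=> fL; rewrite /vimage.
transitivity (linfun f @: <<vbasis U>>)%VS; last by rewrite vbasis_span.
by rewrite limg_span; congr <<_>>%VS; apply: eq_map => x; rewrite lfE.
Qed.

Lemma expad_ideal a n I x : ideal br I -> x \in I -> expad br a n x \in I.
Proof.
move=> iI Hx; rewrite /expad; apply: memv_suml => i _; apply: memvZ.
by elim: (nat_of_ord i) => //= k IH; apply: iI.
Qed.

Section F.
Variables (f : V -> V).
Hypotheses (fL : forall c u v, f (c *: u + v) = c *: f u + f v)
  (fB : bijective f) (fbr : forall x y, f (br x y) = br (f x) (f y)).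

Let finj : injective f. Proof. exact: bij_inj. Qed.

Lemma mem_vimage (U : {vspace V}) x : x \in U -> f x \in vimage f U.
Proof. by move=> Hx; rewrite vimage_img // -(lfE fL); apply: memv_img. Qed.

Lemma mem_vimageP (U : {vspace V}) y : y \in vimage f U -> exists2 x, x \in U & y = f x.
Proof.
by rewrite vimage_img // => /memv_imgP [x Hx ->]; exists x; rewrite ?lfE.
Qed.

Lemma dim_vimage (U : {vspace V}) : \dim (vimage f U) = \dim U.
Proof.
rewrite vimage_img //; apply: limg_dim_eq.
have /eqP -> : lker (linfun f) == 0%VS.
  by apply/lker0P => u v; rewrite !(lfE fL); apply: finj.
by rewrite capv0.
Qed.

Lemma vimage_stable I : (forall x, x \in I -> f x \in I) -> vimage f I = I.
Proof.
move=> H; apply/eqP; rewrite eqEdim dim_vimage leqnn andbT.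
by apply/subvP => y /mem_vimageP [x Hx ->]; apply: H.
Qed.

Lemma preim_stable I y : (forall x, x \in I -> f x \in I) -> f y \in I -> y \in I.
Proof.
move=> H; rewrite -{1}(vimage_stable H) => /mem_vimageP [x Hx E].
by rewrite (finj E).
Qed.

Lemma surj_f y : exists x, y = f x.
Proof. by case: fB => g _ gK; exists (g y); rewrite gK. Qed.

Lemma fD u v : f (u + v) = f u + f v.
Proof. by have := fL 1 u v; rewrite !scale1r. Qed.

Lemma conj_compl A B M : chief_factor br A B ->
  (forall I x, ideal br I -> x \in I -> f x \in I) ->
  complements br A B M -> complements br A B (vimage f M).
Proof.
move=> [iA iB sBA _ _] Hst [sM HAM HB].
have stA := fun x => Hst A x iA; have stB := fun x => Hst B x iB.
split.
- move=> u v /mem_vimageP [x Hx ->] /mem_vimageP [y Hy ->].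
  by rewrite -fbr; apply: mem_vimage; apply: sM.
- apply/eqP; rewrite eqEsubv subvf /=; apply/subvP => z _.
  have [w ->] := surj_f z.
  have : w \in (A + M)%VS by rewrite HAM memvf.
  case/memv_addP => u Hu [v Hv ->].
  by rewrite fD; apply: memv_add; [apply: stA | apply: mem_vimage].
- apply/eqP; rewrite eqEsubv; apply/andP; split; apply/subvP => z.
    case/memv_capP => Hz /mem_vimageP [m Hm Ez].
    have HmA : m \in A by apply: (preim_stable stA); rewrite -Ez.
    by rewrite Ez; apply: stB; rewrite -HB; apply/memv_capP.
  move=> Hz; apply/memv_capP; split; first exact: (subvP sBA).
  have [u Eu] := surj_f z.
  have Hu : u \in B by apply: (preim_stable stB); rewrite -Eu.
  by rewrite Eu; apply: mem_vimage; rewrite -HB in Hu; case/memv_capP: Hu.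
Qed.

Lemma conj_core M K : (forall I x, ideal br I -> x \in I -> f x \in I) ->
  is_core br M K -> is_core br (vimage f M) K.
Proof.
move=> Hst [iK sKM HK]; split => //.
  apply/subvP => k Hk; have [u Eu] := surj_f k.
  have Hu : u \in K by apply: (preim_stable (fun x => Hst K x iK)); rewrite -Eu.
  by rewrite Eu; apply: mem_vimage; apply: (subvP sKM).
move=> I iI sIS; apply: HK => //; apply/subvP => i Hi.
have : f i \in vimage f M by apply: (subvP sIS); apply: Hst.
by case/mem_vimageP => m Hm /finj ->.
Qed.

End F.
End Aut.


Lemma prime_nfact p i : prime p -> (i < p)%N -> ~~ (p %| i`!)%N.
Proof.
move=> pp; elim: i => [|i IH] Hi.
  by rewrite fact0 dvdn1; apply/eqP => E; move: pp; rewrite E.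
rewrite factS Euclid_dvdM // negb_or IH ?(ltnW Hi) // andbT.
by apply/negP => /dvdn_leq => /(_ isT); rewrite leqNgt Hi.
Qed.

Section Main.
Variables (F : fieldType) (V : vectType F) (br : V -> V -> V) (p : nat).
Variables (A B : {vspace V}).
Hypotheses (HL : is_lie br) (hc : has_char F p) (solv : solvable_lie br)
  (hnil : nilp_class_lt br (brs br fullv fullv) p) (cAB : chief_factor br A B).
Implicit Types (I J K M N S X Y W : {vspace V}).
Local Notation L2 := (brs br fullv fullv).

Let nil := nilp_k hnil.
Let iA : ideal br A. Proof. by case: cAB. Qed.
Let iB : ideal br B. Proof. by case: cAB. Qed.
Let sBA : (B <= A)%VS. Proof. by case: cAB. Qed.
Let ab := chief_abelian HL cAB solv.

Lemma choose_n : exists n, [/\ (2 <= n)%N, lcs br L2 n.-1 = 0%VS &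
  forall i, (i < n)%N -> (i`!)%:R != 0 :> F].
Proof.
move: hc hnil; rewrite /has_char /nilp_class_lt; case: eqP => [_ H0 [k Hk]|p0 Hp Hl].
  exists k.+2; split => //.
    apply/eqP; rewrite -subv0 -Hk; exact: lcs_mono.
  by move=> i _; have /pcharf0P -> := H0; rewrite -lt0n fact_gt0.
have pp := pcharf_prime Hp.
exists p; split => //; first exact: prime_gt1.
by move=> i Hi; rewrite -(dvdn_pcharf Hp) prime_nfact.
Qed.

Lemma iter_lcs a x j : a \in L2 -> iter j.+1 (br a) x \in lcs br L2 j.
Proof.
move=> Ha; elim: j => [|j IH]; first exact: memL2.
by rewrite iterS brC // memvN /=; apply: mem_brs.
Qed.

Lemma exp_ok a n : a \in L2 -> (2 <= n)%N -> lcs br L2 n.-1 = 0%VS ->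
  (forall i, (i < n)%N -> (i`!)%:R != 0 :> F) ->
  expad_defined br a n /\ is_lie_aut br (expad br a n).
Proof.
move=> Ha n2 Hl Hf.
have Hn : forall x, iter n (br a) x = 0.
  move=> x; have := iter_lcs x (n.-1) Ha; rewrite prednK ?(ltnW n2) // Hl.
  by rewrite memv0 => /eqP.
have Hn' : forall l x, (n <= l)%N -> iter l (br a) x = 0.
  by move=> l x nl; rewrite -(subnK nl) iterD Hn iter0v.
split; first by split.
apply: expad_aut => // j l x y H.
case: j H => [|j] H; first by rewrite (Hn' l) ?(br0r HL).
case: l H => [|l] H; first by rewrite (Hn' j.+1) ?(br0l HL) //; lia.
have H1 := lcs_br HL (iter_lcs x j Ha) (iter_lcs y l Ha).
have H2 : (n.-1 <= (j + l).+1)%N by lia.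
by move/(subvP (lcs_mono HL H2)): H1; rewrite Hl memv0 => /eqP.
Qed.


Lemma dim_compl M : complements br A B M ->
  (\dim M + \dim A = \dim (fullv : {vspace V}) + \dim B)%N.
Proof. by case=> _ HAM HB; rewrite addnC -dimv_sum_cap HAM HB. Qed.

Lemma expad_id x : expad br 0 1 x = x.
Proof. by rewrite /expad big_ord1 /= fact0 invr1 scale1r. Qed.

Lemma exp0_ok M : [/\ expad_defined br 0 1, is_lie_aut br (expad br 0 1)
  & M = vimage (expad br 0 1) M].
Proof.
split.
- by split => [x|i]; [rewrite /= (br0l HL) | case: i => // _; rewrite fact0 oner_neq0].
- split.
  + by move=> c u v; rewrite !expad_id.
  + by exists id => x; rewrite expad_id.
  + by move=> x y; rewrite !expad_id.
- rewrite /vimage (eq_map expad_id) map_id; exact/esym/vbasis_span.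
Qed.

Lemma noncentral_L2 m0 y0 : y0 \in A -> br m0 y0 \notin B -> (A <= L2 + B)%VS.
Proof.
move=> Hy0 nB.
have sI : (brs br fullv A + B <= A)%VS.
  by rewrite subv_add sBA andbT; apply: brs_sub => u v _ Hv; apply: iA.
have [HI|HI] := chief_cases cAB (ideal_add HL (ideal_brs HL (idealT br) iA) iB) (addvSr _ _) sI.
  by case/negP: nB; rewrite -HI; apply/(subvP (addvSl _ _)); apply: mem_brs => //; apply: memvf.
by rewrite -{1}HI; apply: addvS (subvv B); apply: brs_mono => //; apply: subvf.
Qed.

Lemma br_shift u v w : br u w = br v w - br (v - u) w.
Proof. by rewrite (brBl HL) opprB addrCA subrr addr0. Qed.

Lemma iter_B a m k : a \in A -> (2 <= k)%N -> iter k (br a) m \in B.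
Proof.
move=> Ha; case: k => [|[|k]] // _.
rewrite !iterSr; elim: k => [|k IH] /=.
  by apply: ab => //; apply: idealL.
exact: iB.
Qed.

Lemma exp_m0 a n m : a \in A -> (2 <= n)%N -> expad br a n m - (m + br a m) \in B.
Proof.
move=> Ha; case: n => [|[|n']] // _.
rewrite /expad big_ord_recl big_ord_recl /= fact0 invr1 scale1r.
rewrite scale1r addrA [_ + \sum_(i < n') _]addrC addrK.
apply: memv_suml => i _; apply: memvZ.
by apply: ab => //; apply: idealL.
Qed.

Lemma conj_exists M1 M2 K : complements br A B M1 -> complements br A B M2 ->
  is_core br M1 K -> is_core br M2 K ->
  exists a n, [/\ expad_defined br a n, is_lie_aut br (expad br a n)
                 & M2 = vimage (expad br a n) M1].
Proof.
move=> c1 c2 k1 k2.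
have [[m0 [y0 [Hm0 Hy0 nB]]]|Hc] := classic (exists m0 y0, [/\ m0 \in M1, y0 \in A & br m0 y0 \notin B]); last first.
  have Hcen : forall z y, y \in A -> br z y \in B.
    move=> z y Hy; have [a Ha Hm] := compl_AM_dec c1 z.
    have -> : z = a + (z - a) by rewrite addrC subrK.
    rewrite (brDl HL); apply: memvD; first exact: ab.
    apply: NNPP => nb; apply: Hc; exists (z - a), y; split => //; exact/negP.
  have E1 := central_MK HL cAB solv c1 k1 Hcen.
  have E2 := central_MK HL cAB solv c2 k2 Hcen.
  by exists 0, 1%N; rewrite E1 E2; apply: exp0_ok.
have [al Hal Hmu] := compl_AM_dec c2 m0.
set mu := m0 - al in Hmu.
have [x Hx Hxa] := Surj HL cAB solv c1 k1 nil Hm0 Hy0 nB Hal.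
have := subvP (noncentral_L2 Hy0 nB) x Hx; case/memv_addP => l Hl [b Hb Exl].
have HlA : l \in A.
  have -> : l = x - b by rewrite Exl addrK.
  by apply: memvB => //; apply: (subvP sBA).
have [n [n2 Hl0 Hf]] := choose_n.
have [Hdef Haut] := exp_ok Hl n2 Hl0 Hf.
exists l, n; split => //.
set f := expad br l n.
have [fL fB fbr] := Haut.
have Hst : forall I x, ideal br I -> x \in I -> f x \in I.
  by move=> I x' iI Hx'; apply: expad_ideal.
have nBmu : br mu y0 \notin B.
  apply/negP => H; case/negP: nB.
  have -> : m0 = mu + al by rewrite /mu subrK.
  by rewrite (brDl HL); apply: memvD => //; apply: ab.
have Hfm0 : f m0 - mu \in B.
  have -> : f m0 - mu = (f m0 - (m0 + br l m0)) + (- (br m0 x - al) + br m0 b).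
    rewrite Exl (brDr HL) (brC HL l m0) /mu; set u := br m0 l.
    rewrite opprB !opprD !opprK.
    rewrite -addrA; congr (_ + _); rewrite [_ - br m0 b + al]addrAC addrNK addrA addrK addrC //.
  apply: memvD; first exact: exp_m0.
  by apply: memvD; [rewrite memvN | apply: iB].
have sub : (vimage f M1 <= M2)%VS.
  apply/subvP => z /(mem_vimageP fL) [y Hy ->].
  apply: (ZM HL cAB solv c2 k2 nil Hmu Hy0 nBmu).
  have -> : br mu (f y) = br (f m0) (f y) - br (f m0 - mu) (f y).
    exact: br_shift.
  have iK2 : ideal br K by case: k2.
  apply: memvB.
    by rewrite -fbr; apply: Hst => //; apply: (MM_K HL cAB solv c1 k1 nil).
  by apply: (subvP (compl_BK cAB c2 k2)); apply: idealL.
apply/eqP; rewrite eq_sym eqEdim sub (dim_vimage fL fB) /=.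
have := dim_compl c1; rewrite -(dim_compl c2) => /addIn ->.
by rewrite leqnn.
Qed.

Lemma class_char M K : complements br A B M -> is_core br M K ->
  forall S, conj_cls br M S <-> complements br A B S /\ is_core br S K.
Proof.
move=> cM kM S; split.
  case=> a [n [Hdef [fL fB fbr] ->]].
  have Hst : forall I x, ideal br I -> x \in I -> expad br a n x \in I.
    by move=> I x iI Hx; apply: expad_ideal.
  by split; [apply: conj_compl | apply: conj_core].
by case=> cS kS; apply: (conj_exists cM cS kM kS).
Qed.

Lemma class_eq M K : complements br A B M -> is_core br M K ->
  conj_cls br M = (fun S => complements br A B S /\ is_core br S K).
Proof.
move=> cM kM; apply: functional_extensionality => S.
by apply: propositional_extensionality; apply: class_char.
Qed.

Lemma surj_core N : (exists M, complements br A B M) -> ideal br N ->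
  complements_in_cent br A B N -> exists M, complements br A B M /\ is_core br M N.
Proof.
move=> [M0 c0] iN [HcN HAN].
have [K0 k0] := core_exists HL M0.
have sBN : (B <= N)%VS by rewrite -HAN capvSr.
case: (classic (exists m0 y0, [/\ m0 \in M0, y0 \in A & br m0 y0 \notin B])) => [[m0 [y0 [Hm0 Hy0 nB]]]|Hc]; last first.
  have Hcen : forall z y, y \in A -> br z y \in B.
    move=> z y Hy; have [a Ha Hm] := compl_AM_dec c0 z.
    have -> : z = a + (z - a) by rewrite addrC subrK.
    rewrite (brDl HL); apply: memvD; first exact: ab.
    apply: NNPP => nb; apply: Hc; exists (z - a), y; split => //; exact/negP.
  exists N; split; last by split => // I _; apply.
  split => //; first exact: ideal_subalg.
  apply/eqP; rewrite eqEsubv subvf /=; apply/subvP => x _.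
  by apply/(HcN x).2 => y Hy; apply: Hcen.
pose M := (adl br m0 @^-1: N)%VS.
have memM : forall y, (y \in M) = (br m0 y \in N).
  by move=> y; rewrite /M mem_preim (adlE HL).
have cM : complements br A B M.
  split.
  - move=> y z; rewrite !memM => Hy Hz; rewrite (brJ HL).
    by apply: memvD; [apply: idealL | apply: iN].
  - apply/eqP; rewrite eqEsubv subvf /=; apply/subvP => y _.
    have : br m0 y \in (A + N)%VS.
      by apply/(HcN _).2 => y' Hy'; apply: (L2_cent HL cAB nil) => //; apply: memL2.
    case/memv_addP => al Hal [nu Hnu Ey].
    have [x Hx Hxa] := Surj HL cAB solv c0 k0 nil Hm0 Hy0 nB Hal.
    have -> : y = x + (y - x) by rewrite addrC subrK.
    apply: memv_add => //; rewrite memM (brBr HL) Ey.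
    have -> : al + nu - br m0 x = nu - (br m0 x - al).
      by rewrite opprB addrCA addrA.
    by apply: memvB => //; apply: (subvP sBN).
  - apply/eqP; rewrite eqEsubv; apply/andP; split; apply/subvP => z.
      case/memv_capP => Hz; rewrite memM => HzN.
      apply: (Inj HL cAB solv c0 k0 nil Hm0 Hy0 nB Hz).
      by rewrite -HAN; apply/memv_capP; split => //; apply: iA.
    move=> Hz; apply/memv_capP; split; first exact: (subvP sBA).
    by rewrite memM; apply: (subvP sBN); apply: iB.
exists M; split => //.
have sNM : (N <= M)%VS by apply/subvP => nu Hnu; rewrite memM; apply: iN.
split => // I iI sIM.
have [K kK] := core_exists HL M.
have [iK sKM HK] := kK.
apply: subv_trans (HK I iI sIM) _; apply/subvP => k Hk.
have : k \in (A + N)%VS.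
  apply/(HcN k).2; apply/(proj1 (compl_cent HL cAB solv cM kK) k).1.
  exact: (subvP (addvSr A K)).
case/memv_addP => al Hal [nu Hnu Ek].
rewrite Ek; apply: memvD => //; apply: (subvP sBN).
rewrite -(compl_AK cAB cM kK); apply/memv_capP; split => //.
have -> : al = k - nu by rewrite Ek addrK.
by apply: memvB => //; apply: (subvP (HK N iN sNM)).
Qed.

Lemma supp_compl M : maximal_subalg br M -> supplements br A B M -> complements br A B M.
Proof.
case=> sM nMf _ [_ HAM sBAM]; split => //.
have iJ : ideal br (A :&: M).
  move=> w z /memv_capP [Hz1 Hz2]; apply/memv_capP; split; first exact: iA.
  have : w \in (A + M)%VS by rewrite HAM memvf.
  case/memv_addP => a Ha [m Hm ->]; rewrite (brDl HL); apply: memvD.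
    by apply: (subvP (subv_trans sBAM (capvSr _ _))); apply: ab.
  exact: sM.
have [//|HJ] := chief_cases cAB iJ sBAM (capvSl _ _).
exfalso; move/negP: nMf; apply; rewrite -HAM; apply/eqP; apply: esym; apply/addv_idPr.
by rewrite -HJ capvSr.
Qed.
End Main.


Unset Implicit Arguments.
Theorem proposition2p7 (F : fieldType) (V : vectType F) (br : V -> V -> V)
    (p : nat) (A B : {vspace V}) :
  is_lie br -> has_char F p -> solvable_lie br ->
  nilp_class_lt br (brs br fullv fullv) p ->
  chief_factor br A B -> (exists M, complements br A B M) ->
  [/\ (* every subalgebra has a core; conjugates of complements are complements *)
      (forall M, exists K, is_core br M K),
      (forall M S, complements br A B M -> conj_cls br M S -> complements br A B S) /\
      (* all members of a conjugacy class have a common core *)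
      (forall M S K, complements br A B M -> conj_cls br M S ->
         is_core br M K -> is_core br S K) /\
      (* the core of a complement complements A/B in C_L(A/B) *)
      (forall M K, complements br A B M -> is_core br M K ->
         ideal br K /\ complements_in_cent br A B K),
      (* injectivity on classes *)
      (forall M1 M2 K, complements br A B M1 -> complements br A B M2 ->
         is_core br M1 K -> is_core br M2 K -> conj_cls br M1 = conj_cls br M2),
      (* surjectivity *)
      (forall N, ideal br N -> complements_in_cent br A B N ->
         exists M, complements br A B M /\ is_core br M N) &
      (* bijection between precrowns associated with A/B and classes *)
      exists f : {vspace V} * {vspace V} -> ({vspace V} -> Prop),
        [/\ forall P, is_precrown br A B P -> is_compl_class br A B (f P),
            forall P Q, is_precrown br A B P -> is_precrown br A B Q ->
              f P = f Q -> P = Q &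
            forall X, is_compl_class br A B X ->
              exists P, is_precrown br A B P /\ f P = X]].
Proof.
move=> HL hc solv hnil cAB hM.
have cc := @class_char _ _ _ _ _ _ HL hc solv hnil cAB.
have ce := @class_eq _ _ _ _ _ _ HL hc solv hnil cAB.
split.
- exact: core_exists HL.
- split; [|split].
  + move=> M S cM Hcl; have [K kM] := core_exists HL M.
    by case: ((cc _ _ cM kM S).1 Hcl).
  + by move=> M S K cM Hcl kM; case: ((cc _ _ cM kM S).1 Hcl).
  + move=> M K cM kM; split; first by case: kM.
    exact: (compl_cent HL cAB solv cM kM).
- by move=> M1 M2 K c1 c2 k1 k2; rewrite (ce _ _ c1 k1) (ce _ _ c2 k2).
- by move=> N iN cN; apply: (surj_core HL solv hnil cAB hM iN cN).
exists (fun P S => complements br A B S /\ is_core br S P.2); split.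
- move=> P [M [K [mM sM kM _ ->]]].
  have cM := supp_compl HL solv cAB mM sM.
  by exists M; split => //; rewrite (ce _ _ cM kM).
- move=> P Q [M [K [mM sM kM _ ->]]] [M' [K' [mM' sM' kM' _ ->]]] /= E.
  have cM := supp_compl HL solv cAB mM sM.
  have := f_equal (fun g => g M) E => /= EM.
  have : complements br A B M /\ is_core br M K' by rewrite -EM.
  by case=> _ kM2; rewrite (core_uniq kM kM2).
- move=> X [M [cM ->]]; have [K kM] := core_exists HL M.
  exists ((A + K)%VS, K); split; last by rewrite (ce _ _ cM kM).
  exists M, K; split => //.
  + exact: (compl_maximal HL cAB solv cM).
  + by case: cM => sM HAM HB; split => //; rewrite HB subvv.
  + split; [exact: (compl_monolithic HL cAB solv cM kM) | exact: (compl_primitive HL cAB solv cM kM)].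
Qed.
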